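(* Let $G=\langle a,t\mid ta^2t^{-1}=a^3\rangle$ be the Baumslag--Solitar group $BS(2,3)$ with generating set $\{a,t\}$. Then the growth rate of $G$ is bounded below by $\frac{1+\sqrt{13}}{2}$.
   Context: For a group $G$ generated by a finite set $S$, let $\gamma(n)=\#\{x\in G:\|x\|_S\leq n\}$, where $\|\cdot\|_S$ is the word length with respect to $S\cup S^{-1}$. The growth rate of $G$ with respect to $S$ is $\lim_{n\to\infty}\gamma(n)^{1/n}$. *)

(* Defs.v *)
From HB Require Import structures.
From mathcomp Require Import all_boot all_order all_algebra.
From mathcomp Require Import all_classical all_reals all_analysis.
Set Implicit Arguments. Unset Strict Implicit. Unset Printing Implicit Defensive.
Import Order.TTheory GRing.Theory Num.Theory.

(* A letter is a pair (is_t, inverted):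
   (false,false) = a, (false,true) = a^-1, (true,false) = t, (true,true) = t^-1.
   Words are finite sequences of letters (words over S u S^-1, S = {a,t}). *)
Definition letter := (bool * bool)%type.
Definition word := seq letter.
Definition inv_letter (x : letter) : letter := (x.1, ~~ x.2).
Definition bs_a : letter := (false, false).
Definition bs_t : letter := (true, false).

Definition bs_relator : word :=
  [:: bs_t; bs_a; bs_a; inv_letter bs_t;
      inv_letter bs_a; inv_letter bs_a; inv_letter bs_a].

(* Two words represent the same element of G iff they are related by the
   congruence generated by free cancellation x x^-1 = 1 and the relator = 1.
   The elements of G are exactly the classes of this equivalence. *)
Inductive bs_equiv : word -> word -> Prop :=
| bs_refl w : bs_equiv w w
| bs_sym u v : bs_equiv u v -> bs_equiv v u
| bs_trans u v w : bs_equiv u v -> bs_equiv v w -> bs_equiv u w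
| bs_free u x v : bs_equiv (u ++ x :: inv_letter x :: v) (u ++ v)
| bs_rel u v : bs_equiv (u ++ bs_relator ++ v) (u ++ v).

(* A list s "covers the ball of radius n" if it consists of
   words of length <= n and every word of length <= n is equivalent to one
   in s.  The minimal size of such a list is the number of equivalence
   classes of words of length <= n, i.e. gamma(n) = #{x in G : |x|_S <= n}. *)
Definition covers_ball (n : nat) (s : seq word) : Prop :=
  (forall w, w \in s -> size w <= n) /\
  (forall w, size w <= n -> exists2 w', w' \in s & bs_equiv w w').

Fixpoint all_words (n : nat) : seq word :=
  if n is m.+1 then [::] :: [seq x :: w | x <- enum {: letter}, w <- all_words m]
  else [:: [::]].

Lemma all_wordsP n w : size w <= n -> w \in all_words n.
Proof.
elim: n w => [|n IH] w.
- by case: w => [|x w] //= _; rewrite inE.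
- case: w => [|x w] /=; first by rewrite inE eqxx.
  rewrite ltnS => /IH Hw; rewrite in_cons; apply/orP; right.
  by apply/allpairsPdep; exists x, w; rewrite mem_enum.
Qed.

Lemma cover_exists n :
  exists k, `[< exists s, size s = k /\ covers_ball n s >].
Proof.
exists (size [seq w <- all_words n | size w <= n]); apply/asboolP.
exists [seq w <- all_words n | size w <= n]; split => //; split.
- by move=> w; rewrite mem_filter => /andP[].
- move=> w Hw; exists w; last exact: bs_refl.
  by rewrite mem_filter Hw all_wordsP.
Qed.

Definition bs_gamma (n : nat) : nat := ex_minn (cover_exists n).

(* Main.v *)
Require Import Defs.
From HB Require Import structures.
From mathcomp Require Import all_boot all_order all_algebra.
From mathcomp Require Import all_classical all_reals all_analysis.
From mathcomp Require Import zify lra.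
Import Order.TTheory GRing.Theory Num.Theory.
Import numFieldNormedType.Exports.
Local Open Scope classical_set_scope.
Local Open Scope ring_scope.
Definition block := (bool * int)%type.
Definition state := (int * seq block)%type.

Definition okr (e : bool) (r : int) : bool :=
  if e then (-1 <= r) && (r <= 1) else (0 <= r) && (r <= 1).

Fixpoint valid (bs : seq block) : bool :=
  match bs with
  | [::] => true
  | b :: bs' => okr b.1 b.2 &&
      (match bs' with b' :: _ => (b.2 != 0) || (b'.1 == b.1) | [::] => true end)
      && valid bs'
  end.

Lemma valid_nil : valid [::]. Proof. by []. Qed.
Lemma valid1 e r : valid [:: (e, r)] = okr e r.
Proof. by rewrite /= !andbT. Qed.
Lemma valid2 e r b bs : valid ((e, r) :: b :: bs) =
  [&& okr e r, (r != 0) || (b.1 == e) & valid (b :: bs)].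
Proof. rewrite {1}/valid -/valid. by rewrite -andbA. Qed.
Arguments valid : simpl never.
Definition act_t (s : state) : state :=
  let q := (s.1 %/ 2)%Z in let r := s.1 - q * 2 in
  match s.2 with
  | (true, r') :: rest => if r == 0 then (q * 3 + r', rest) else (q * 3, (false, r) :: s.2)
  | _ => (q * 3, (false, r) :: s.2)
  end.

Definition act_T (s : state) : state :=
  let q := ((s.1 + 1) %/ 3)%Z in let r := s.1 - q * 3 in
  match s.2 with
  | (false, r') :: rest => if r == 0 then (q * 2 + r', rest) else (q * 2, (true, r) :: s.2)
  | _ => (q * 2, (true, r) :: s.2)
  end.

Definition act_letter (x : letter) (s : state) : state :=
  match x with
  | (false, false) => (s.1 + 1, s.2)
  | (false, true) => (s.1 - 1, s.2)
  | (true, false) => act_t s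
  | (true, true) => act_T s
  end.

Definition act (w : word) (s : state) : state := foldr act_letter s w.

Lemma act_cat u v s : act (u ++ v) s = act u (act v s).
Proof. by rewrite /act foldr_cat. Qed.

Definition vs (s : state) := valid s.2.

Lemma valid_cons e r bs : valid ((e, r) :: bs) =
  okr e r && (match bs with b' :: _ => (r != 0) || (b'.1 == e) | [::] => true end) && valid bs.
Proof. by []. Qed.

Lemma act_t_valid s : vs s -> vs (act_t s).
Proof.
case: s => m bs; rewrite /vs /act_t /=.
case: bs => [|[e r'] rest] /=.
  move=> _; rewrite valid1 /okr /=; apply/andP; lia.
case: e => /=.
- case: ifP => [_|/eqP Hr].
  + by case: rest => [|b rest]; rewrite ?valid2 ?valid1 // => /and3P[].
  + move=> H; rewrite valid2 H andbT /okr /=; apply/andP; split; first lia.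
    by apply/orP; left; apply/eqP.
- move=> H; rewrite valid2 H andbT /okr /= eqxx orbT andbT; lia.
Qed.

Lemma act_T_valid s : vs s -> vs (act_T s).
Proof.
case: s => m bs; rewrite /vs /act_T /=.
case: bs => [|[e r'] rest] /=.
  move=> _; rewrite valid1 /okr /=; apply/andP; lia.
case: e => /=.
- move=> H; rewrite valid2 H andbT /okr /= eqxx orbT andbT; lia.
- case: ifP => [_|/eqP Hr].
  + by case: rest => [|b rest]; rewrite ?valid2 ?valid1 // => /and3P[].
  + move=> H; rewrite valid2 H andbT /okr /=; apply/andP; split; first lia.
    by apply/orP; left; apply/eqP.
Qed.

Lemma act_letter_valid x s : vs s -> vs (act_letter x s).
Proof.
case: x => [[] []] /=; [exact: act_T_valid|exact: act_t_valid|by []|by []].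
Qed.

Lemma act_valid w s : vs s -> vs (act w s).
Proof. elim: w => [|x w IH] //= H; exact/act_letter_valid/IH. Qed.

Definition tres (q r : int) (bs : seq block) : state :=
  match bs with
  | (true, r') :: rest => if r == 0 then (q * 3 + r', rest) else (q * 3, (false, r) :: bs)
  | _ => (q * 3, (false, r) :: bs)
  end.
Definition Tres (q r : int) (bs : seq block) : state :=
  match bs with
  | (false, r') :: rest => if r == 0 then (q * 2 + r', rest) else (q * 2, (true, r) :: bs)
  | _ => (q * 2, (true, r) :: bs)
  end.

Lemma act_t_eq q r bs : 0 <= r <= 1 -> act_t (q * 2 + r, bs) = tres q r bs.
Proof.
move=> /andP[h1 h2]; rewrite /act_t /=.
have -> : ((q * 2 + r) %/ 2)%Z = q by lia.
by have -> : q * 2 + r - q * 2 = r by lia.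
Qed.

Lemma act_T_eq q r bs : -1 <= r <= 1 -> act_T (q * 3 + r, bs) = Tres q r bs.
Proof.
move=> /andP[h1 h2]; rewrite /act_T /=.
have -> : ((q * 3 + r + 1) %/ 3)%Z = q by lia.
by have -> : q * 3 + r - q * 3 = r by lia.
Qed.

Lemma dec2 (m : int) : exists q r, m = q * 2 + r /\ 0 <= r <= 1.
Proof. exists (m %/ 2)%Z, (m - (m %/ 2)%Z * 2); split; [lia|apply/andP; lia]. Qed.
Lemma dec3 (m : int) : exists q r, m = q * 3 + r /\ -1 <= r <= 1.
Proof. exists ((m + 1) %/ 3)%Z, (m - ((m + 1) %/ 3)%Z * 3); split; [lia|apply/andP; lia]. Qed.

Lemma tT s : vs s -> act_t (act_T s) = s.
Proof.
case: s => m bs; rewrite /vs /=.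
have [q [r [-> Hr]]] := dec3 m.
rewrite act_T_eq //.
case: bs => [|[e r'] rest].
  by move=> _; rewrite /= -[q * 2]addr0 act_t_eq //= addr0.
case: e.
  by move=> _; rewrite /= -[q * 2]addr0 act_t_eq //= addr0.
rewrite /Tres; case: (r =P 0) => [->|Hr0] H.
- rewrite addr0; have Hr' : 0 <= r' <= 1.
    by case: rest H => [|b rest]; rewrite ?valid1 ?valid2 /okr //= => /and3P[].
  rewrite act_t_eq // /tres.
  case: rest H => [|[e'' r''] rest] //.
  rewrite valid2 /= => /and3P[_ H2 _].
  case: e'' H2 => //= H2; case: (r' =P 0) => [Hr0|] //.
  by move: H2; rewrite Hr0.
- by rewrite -[X in act_t (X, _)]addr0 act_t_eq //= addr0.
Qed.

Lemma Tt s : vs s -> act_T (act_t s) = s.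
Proof.
case: s => m bs; rewrite /vs /=.
have [q [r [-> Hr]]] := dec2 m.
rewrite act_t_eq //.
case: bs => [|[e r'] rest].
  by move=> _; rewrite /= -[X in act_T (X, _)]addr0 act_T_eq //= addr0.
case: e; last first.
  by move=> _; rewrite /= -[X in act_T (X, _)]addr0 act_T_eq //= addr0.
rewrite /tres; case: (r =P 0) => [->|Hr0] H.
- rewrite addr0; have Hr' : -1 <= r' <= 1.
    by case: rest H => [|b rest]; rewrite ?valid1 ?valid2 /okr //= => /and3P[].
  rewrite act_T_eq // /Tres.
  case: rest H => [|[e'' r''] rest] //.
  rewrite valid2 /= => /and3P[_ H2 _].
  case: e'' H2 => //= H2; case: (r' =P 0) => [Hr0|] //.
  by move: H2; rewrite Hr0.
- by rewrite -[X in act_T (X, _)]addr0 act_T_eq //= addr0.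
Qed.

Lemma relator_act s : vs s -> act bs_relator s = s.
Proof.
case: s => m bs; rewrite /vs /act /=.
have [q [r [-> Hr]]] := dec3 m.
have -> : q * 3 + r - 1 - 1 - 1 = (q - 1) * 3 + r by lia.
rewrite act_T_eq // /Tres.
have E : forall x : int, (q - 1) * 2 + x + 1 + 1 = q * 2 + x by move=> x; lia.
case: bs => [|[e r'] rest].
  by move=> _; rewrite /= -[X in (X + 1 + 1)]addr0 E act_t_eq //= addr0.
case: e.
  by move=> _; rewrite /= -[X in (X + 1 + 1)]addr0 E act_t_eq //= addr0.
case: (r =P 0) => [->|Hr0] H.
- rewrite addr0 E; have Hr' : 0 <= r' <= 1.
    by case: rest H => [|b rest]; rewrite ?valid1 ?valid2 /okr //= => /and3P[].
  rewrite act_t_eq // /tres.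
  case: rest H => [|[e'' r''] rest] //.
  rewrite valid2 /= => /and3P[_ H2 _].
  case: e'' H2 => //= H2; case: (r' =P 0) => [Hr0|] //.
  by move: H2; rewrite Hr0.
- by rewrite -[X in (X + 1 + 1)]addr0 E act_t_eq //= addr0.
Qed.

Definition s0 : state := (0, [::]).

Lemma act_equiv u v s : vs s -> bs_equiv u v -> act u s = act v s.
Proof.
move=> Hs H; elim: H => {u v} //.
- by move=> u v w _ -> _ ->.
- move=> u x v; rewrite !act_cat /=.
  have Hv := @act_valid v s Hs.
  case: x => [[] []] /=; rewrite ?Tt ?tT //.
  + by rewrite addrK -surjective_pairing.
  + by rewrite subrK -surjective_pairing.
- move=> u v; rewrite !act_cat relator_act //; exact: (@act_valid v s Hs).
Qed.

Definition lt_ : letter := (true, false).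
Definition lT_ : letter := (true, true).
Definition la_ : letter := (false, false).
Definition lA_ : letter := (false, true).

Definition units : seq word := [:: [:: lt_; la_]; [:: lT_; la_]; [:: lT_; lA_]].
Definition dup (w : word) : word := if w is x :: w' then x :: x :: w' else [::].

Fixpoint F (n : nat) : seq word :=
  match n with
  | 0 => [:: [::]]
  | 1 => [::]
  | S ((S m) as p) => [seq dup w | w <- F p] ++ [seq u ++ w | u <- units, w <- F m]
  end.

Definition blockw (b : block) : word :=
  (true, b.1) :: (if b.2 == 1 then [:: la_] else if b.2 == -1 then [:: lA_] else [::]).
Definition dec (bs : seq block) : word := flatten [seq blockw b | b <- bs].

Definition Good (w : word) : Prop :=
  exists bs, act w s0 = (0, bs) /\ dec bs = w /\
    (forall x w', w = x :: w' -> x.1 = true /\ exists r rest, bs = (x.2, r) :: rest).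

Lemma F_rec m : F m.+2 = [seq dup w | w <- F m.+1] ++ [seq u ++ w | u <- units, w <- F m].
Proof. by []. Qed.

Lemma F_prop n : (forall w, w \in F n -> size w = n /\ Good w) /\
                 (forall w, w \in F n.+1 -> size w = n.+1 /\ Good w).
Proof.
elim: n => [|n [IH1 IH2]].
  split => // w; rewrite inE => /eqP ->; split => //.
  by exists [::]; split => //; split => // x w'.
split => // w; rewrite F_rec mem_cat => /orP [].
- case/mapP => w' /IH2 [Hs [bs [Ha [Hd Hh]]]] ->.
  case: w' Hs Ha Hd Hh => [//|x w'] Hs Ha Hd Hh /=; split; first by rewrite -Hs.
  clear Hs.
  have [Hx [r [rest Hbs]]] := Hh x w' erefl.
  case: x Hx Ha Hd Hh Hbs => [xt xe] /= -> Ha Hd Hh Hbs.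
  exists ((xe, 0) :: bs); split; last split.
  + rewrite /= Ha Hbs; case: xe Ha Hd Hh Hbs => Ha Hd Hh Hbs /=.
    * have := act_T_eq 0 0 ((true, r) :: rest); rewrite mul0r addr0 => -> //.
    * have := act_t_eq 0 0 ((false, r) :: rest); rewrite mul0r addr0 => -> //.
  + by rewrite /dec /= -/(dec bs) Hd.
  + by move=> x w'' [<- _]; split => //; exists 0, bs.
- case/allpairsP => [[u w']] [/= Hu /IH1 [Hs [bs [Ha [Hd Hh]]]] ->].
  rewrite size_cat Hs.
  move: Hu; rewrite !inE => /or3P [] /eqP ->; (split; first by []).
  + exists ((false, 1) :: bs); split; last split.
    * rewrite /act /= -/(act w' s0) Ha.
      have := act_t_eq 0 1 bs; rewrite mul0r add0r => -> //.
      by case: bs {Ha Hd Hh} => [|[[] ?] ?].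
    * by rewrite /dec /= -/(dec bs) Hd.
    * by move=> x w'' [<- _]; split => //; exists 1, bs.
  + exists ((true, 1) :: bs); split; last split.
    * rewrite /act /= -/(act w' s0) Ha.
      have := act_T_eq 0 1 bs; rewrite mul0r add0r => -> //.
      by case: bs {Ha Hd Hh} => [|[[] ?] ?].
    * by rewrite /dec /= -/(dec bs) Hd.
    * by move=> x w'' [<- _]; split => //; exists 1, bs.
  + exists ((true, -1) :: bs); split; last split.
    * rewrite /act /= -/(act w' s0) Ha.
      have := act_T_eq 0 (-1) bs; rewrite mul0r add0r => -> //.
      by case: bs {Ha Hd Hh} => [|[[] ?] ?].
    * by rewrite /dec /= -/(dec bs) Hd.
    * by move=> x w'' [<- _]; split => //; exists (-1), bs.
Qed.

Lemma F_good n w : w \in F n -> size w = n /\ Good w.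
Proof. by case: (F_prop n) => H _; apply: H. Qed.

Lemma F_head n w : w \in F n -> forall x w', w = x :: w' -> x.1 = true.
Proof. by move=> /F_good [_ [bs [_ [_ H]]]] x w' /H []. Qed.

Lemma F_uniq n : uniq (F n) /\ uniq (F n.+1).
Proof.
elim: n => [|n [IH1 IH2]]; first by [].
split => //; rewrite F_rec cat_uniq; apply/and3P; split.
- rewrite map_inj_in_uniq //.
  by move=> [|x w] [|y v] Hw Hv //= [-> _ ->].
- apply/hasPn => w /allpairsP [[u w'] [Hu _ ->]]; move: Hu => /= Hu.
  apply/negP => /mapP [[|x v] Hv E].
    by move: Hu E; rewrite !inE => /or3P [] /eqP ->.
  have Hx := @F_head n.+1 (x :: v) Hv x v erefl.
  by move: Hu E; rewrite !inE => /or3P [] /eqP -> [_ E _]; rewrite -E in Hx.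
- apply: allpairs_uniq => //.
  move=> [u1 w1] [u2 w2] H1 H2.
  move: H1 H2 => /allpairsP [[a1 b1] [Ha1 _ [-> ->]]].
  move=> /allpairsP [[a2 b2] [Ha2 _ [-> ->]]] /= /eqP.
  rewrite eqseq_cat; first by case/andP => /eqP -> /eqP ->.
  by move: Ha1 Ha2 => /= Ha1 Ha2; move: Ha1 Ha2; rewrite !inE => /or3P [] /eqP -> /or3P [] /eqP ->.
Qed.

Lemma F_inj n w1 w2 : w1 \in F n -> w2 \in F n -> act w1 s0 = act w2 s0 -> w1 = w2.
Proof.
move=> /F_good [_ [b1 [H1 [D1 _]]]] /F_good [_ [b2 [H2 [D2 _]]]].
by rewrite H1 H2 => [[E]]; rewrite -D1 -D2 E.
Qed.

Lemma gamma_ge n : (size (F n) <= bs_gamma n)%N.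
Proof.
rewrite /bs_gamma; case: ex_minnP => k /asboolP [s [Hsz [Hs1 Hs2]]] _.
rewrite -Hsz -(size_map (act^~ s0) s) -(size_map (act^~ s0) (F n)).
apply: uniq_leq_size.
  rewrite map_inj_in_uniq; first by case: (F_uniq n).
  by move=> ? ? H1 H2; apply: F_inj H1 H2.
move=> y /mapP [w Hw ->]; have [Hsw _] := @F_good n w Hw.
have [w' Hw' He] := Hs2 w (eq_leq Hsw).
apply/mapP; exists w' => //; exact: act_equiv He.
Qed.

Lemma size_F_rec m : size (F m.+2) = (size (F m.+1) + 3 * size (F m))%N.
Proof. by rewrite F_rec size_cat size_map size_allpairs. Qed.

Lemma equiv_catl u u' v : bs_equiv u u' -> bs_equiv (u ++ v) (u' ++ v).
Proof.
elim => {u u'}.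
- by move=> w; apply: bs_refl.
- by move=> ? ? _ H; apply: bs_sym.
- by move=> ? ? ? _ H1 _ H2; apply: bs_trans H1 H2.
- by move=> p x q; rewrite -!catA /=; apply: bs_free.
- by move=> p q; rewrite -!catA; apply: bs_rel.
Qed.

Lemma equiv_catr p v v' : bs_equiv v v' -> bs_equiv (p ++ v) (p ++ v').
Proof.
elim => {v v'}.
- by move=> w; apply: bs_refl.
- by move=> ? ? _ H; apply: bs_sym.
- by move=> ? ? ? _ H1 _ H2; apply: bs_trans H1 H2.
- by move=> u x q; rewrite !catA; apply: bs_free.
- by move=> u q; rewrite !catA -(catA _ bs_relator); apply: bs_rel.
Qed.

Lemma gamma_cover n : exists s, size s = bs_gamma n /\ covers_ball n s.
Proof. by rewrite /bs_gamma; case: ex_minnP => k /asboolP. Qed.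

Lemma gamma_min n s : covers_ball n s -> (bs_gamma n <= size s)%N.
Proof.
move=> H; rewrite /bs_gamma; case: ex_minnP => k _; apply.
by apply/asboolP; exists s.
Qed.

Lemma gamma_pos n : (0 < bs_gamma n)%N.
Proof.
have [s [<- [_ H]]] := gamma_cover n.
by have [w' Hw _] := H [::] isT; case: s Hw {H}.
Qed.

Lemma gamma_submul m n : (bs_gamma (m + n) <= bs_gamma m * bs_gamma n)%N.
Proof.
have [s1 [<- [H1a H1b]]] := gamma_cover m.
have [s2 [<- [H2a H2b]]] := gamma_cover n.
rewrite -(size_allpairs cat); apply: gamma_min; split.
  move=> w /allpairsP [[u v] [/= Hu Hv ->]].
  by rewrite size_cat leq_add // ?H1a ?H2a.
move=> w Hw; rewrite -(cat_take_drop m w).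
have Ht : (size (take m w) <= m)%N by rewrite size_take; case: ifP => // /negbT; rewrite -leqNgt.
have Hd : (size (drop m w) <= n)%N by rewrite size_drop leq_subLR.
have [u' Hu' Eu] := H1b (take m w) Ht.
have [v' Hv' Ev] := H2b (drop m w) Hd.
exists (u' ++ v'); first by apply/allpairsP; exists (u', v').
exact: (bs_trans (equiv_catl _ _ (drop m w) Eu) (equiv_catr u' _ _ Ev)).
Qed.
Lemma fekete (R : realType) (a : nat -> R) :
  (forall n, 0 <= a n) -> (forall m n, a (m + n)%N <= a m + a n) ->
  (fun n => a n / n%:R) @ \oo --> inf [set a k / k%:R | k in [set k | (0 < k)%N]].
Proof.
move=> a0 sub.
set E := [set _ | _ in _]; set l := inf E.
have hE : has_inf E.
  split; first by exists (a 1%N / 1%:R); exists 1%N.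
  by exists 0 => x [k _ <-]; rewrite divr_ge0.
have lbE k : (0 < k)%N -> l <= a k / k%:R.
  by move=> k0; apply: (ge_inf hE.2); exists k.
have key k q r : a (q * k + r)%N <= q%:R * a k + a r.
  elim: q => [|q IH]; first by rewrite mul0n add0n mul0r add0r.
  rewrite mulSn -addnA (le_trans (sub _ _)) // mulrSr.
  lra.
apply/cvgrPdist_le => eps eps0.
have eps20 : 0 < eps / 2 by rewrite divr_gt0.
have [_ [k k0 <-] Hk] := inf_adherent eps20 hE.
set M := \sum_(r < k) a r.
have aM r : (r < k)%N -> a r <= M.
  move=> rk; rewrite /M (bigD1 (Ordinal rk)) //= lerDl.
  by apply: sumr_ge0 => i _.
have M0 : 0 <= M by apply: sumr_ge0 => i _.
exists (Num.trunc (M * 2 / eps)).+1 => // n /= Nn.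
have n0 : (0 < n)%N by apply: leq_trans Nn.
have nR : 0 < n%:R :> R by rewrite ltr0n.
have kR : 0 < k%:R :> R by rewrite ltr0n.
have h1 := lbE n n0.
have h2 : a n / n%:R <= a k / k%:R + M / n%:R.
  have Hn : a n <= (n %/ k)%:R * a k + M.
    rewrite {1}(divn_eq n k) (le_trans (key _ _ _)) // lerD2l aM //.
    by rewrite ltn_mod.
  rewrite ler_pdivrMr // mulrDl divfK ?gt_eqF // (le_trans Hn) // lerD2r.
  rewrite mulrAC -mulrA mulrC ler_wpM2l // ler_pdivlMr // -natrM ler_nat.
  by rewrite leq_trunc_div.
have h3 : M / n%:R <= eps / 2.
  have := truncnS_gt (M * 2 / eps); rewrite -(ler_nat R) in Nn => h.
  have h' : M * 2 / eps < n%:R by apply: (lt_le_trans h).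
  move: h'; rewrite ltr_pdivrMr // => h'.
  rewrite ler_pdivrMr //; lra.
rewrite ler_norml; apply/andP; split; lra.
Qed.
Section L.
Variable R : realType.
Definition lam : R := (1 + Num.sqrt 13) / 2.
Lemma lam_facts : 1 <= lam /\ lam ^+ 2 = lam + 3.
Proof.
have s2 : Num.sqrt (13 : R) ^+ 2 = 13 by rewrite sqr_sqrtr.
have s0 : 0 <= Num.sqrt (13 : R) by [].
rewrite /lam; split; first nra.
rewrite expr2 in s2 *; nra.
Qed.
End L.

Lemma fam_bound (R : realType) n :
  lam R ^+ n.+2 <= lam R ^+ 3 * (size (F n.+2))%:R.
Proof.
have [l1 l2] := lam_facts R.
have l0 : 0 <= lam R by lra.
suff : lam R ^+ n.+2 <= lam R ^+ 3 * (size (F n.+2))%:R /\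
       lam R ^+ n.+3 <= lam R ^+ 3 * (size (F n.+3))%:R by case.
elim: n => [|n [IH1 IH2]].
  rewrite !size_F_rec /=.
  have -> : (0 + 3 * 1)%N = 3%N by [].
  have -> : (0 + 3 * 1 + 3 * 0)%N = 3%N by [].
  have p2 : 0 <= lam R ^+ 2 by rewrite exprn_ge0.
  have p3 : lam R ^+ 2 <= lam R ^+ 3 by rewrite (exprS _ 2) ler_peMl.
  split; lra.
split => //.
rewrite size_F_rec natrD natrM mulrDr.
have E : lam R ^+ n.+4 = lam R ^+ n.+3 + 3 * lam R ^+ n.+2.
  by rewrite -addn2 exprD l2 mulrDr -exprSr [3 * _]mulrC.
rewrite E; lra.
Qed.

Lemma gamma_lam (R : realType) n :
  lam R ^+ n <= lam R ^+ 3 * (bs_gamma n)%:R.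
Proof.
have [l1 _] := lam_facts R.
have g1 : 1 <= (bs_gamma n)%:R :> R by rewrite ler1n gamma_pos.
have l3 : 0 <= lam R ^+ 3 by rewrite exprn_ge0 //; lra.
case: n g1 => [|[|n]] g1.
- rewrite expr0; apply: (le_trans (exprn_ege1 3 l1)); rewrite ler_peMr //.
- rewrite expr1; apply: (le_trans (_ : lam R <= lam R ^+ 3)).
    have h2 : lam R <= lam R ^+ 2 by rewrite expr2 ler_peMl //; lra.
    have h3 : lam R ^+ 2 <= lam R ^+ 3 by rewrite (exprS _ 2) ler_peMl //; lra.
    lra.
  by rewrite ler_peMr.
- apply: (le_trans (fam_bound R n)); rewrite ler_pM2l; last first.
    rewrite exprn_gt0 //; lra.
  by rewrite ler_nat gamma_ge.
Qed.

Theorem proposition5p2 (R : realType) :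
  exists L : R,
    (fun n : nat => ((bs_gamma n)%:R : R) `^ (n%:R^-1)) @ \oo --> L /\
    (1 + Num.sqrt 13) / 2 <= L.
Proof.
pose g n : R := (bs_gamma n)%:R.
pose a n := ln (g n).
have g1 n : 1 <= g n by rewrite /g ler1n gamma_pos.
have g0 n : 0 < g n by apply: lt_le_trans (g1 n).
have a0 n : 0 <= a n by apply: ln_ge0.
have asub m n : a (m + n)%N <= a m + a n.
  rewrite /a -lnM ?posrE // ler_ln ?posrE ?mulr_gt0 //.
  by rewrite /g -natrM ler_nat gamma_submul.
have Hf := @fekete R a a0 asub.
set l := inf _ in Hf.
exists (expR l); split.
  have -> : (fun n : nat => ((bs_gamma n)%:R : R) `^ (n%:R^-1)) =
            expR \o (fun n => a n / n%:R).
    apply: funext => n /=; rewrite /powR.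
    have -> : ((bs_gamma n)%:R == 0 :> R) = false by apply/negbTE; rewrite gt_eqF // g0.
    by rewrite mulrC.
  apply: cvg_comp; first exact: Hf. by have := @continuous_expR R l.
have [l1 _] := lam_facts R.
have lpos : 0 < lam R by lra.
change (lam R <= expR l).
rewrite -[X in X <= _](lnK lpos) ler_expR.
set L := ln (lam R).
have L0 : 0 <= L by apply: ln_ge0.
have Hc : (fun n => L - (6 * L) * harmonic n) @ \oo --> L.
  have H2 : (fun n => L - (6 * L) * harmonic n) @ \oo --> L - (6 * L) * 0.
    apply: cvgB; first exact: cvg_cst.
    apply: cvgMl_tmp; exact: cvg_harmonic.
  by rewrite mulr0 subr0 in H2.
apply: (ler_cvg_to Hc Hf).
exists 1%N => // n /= n1.
have Hb := gamma_lam R n.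
have Hl : L *+ n <= L *+ 3 + a n.
  have p1 : 0 < lam R ^+ n by rewrite exprn_gt0.
  have p3 : 0 < lam R ^+ 3 by rewrite exprn_gt0.
  have gn := g0 n.
  rewrite /L /a -!lnXn // -lnM ?posrE //.
  by rewrite ler_ln ?posrE ?mulr_gt0.
rewrite -[L *+ n]mulr_natr -[L *+ 3]mulr_natr in Hl.
have N1 : 1 <= n%:R :> R by rewrite ler1n.
rewrite -[n.+1%:R]natr1.
move: Hl N1; move: (a n) => A; move: (n%:R : R) => N Hl N1.
have hE : (N + 1)^-1 * (N + 1) = 1 by rewrite mulVf //; apply/lt0r_neq0; lra.
set h := (N + 1)^-1 in hE *.
have h0 : 0 <= h by rewrite /h invr_ge0; lra.
have hN : h <= h * N by rewrite ler_peMr.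
have hh : h <= 1 / 2 by lra.
have Lh : L * h <= L * (1 / 2) by rewrite ler_wpM2l.
have E : L * h * N = L - L * h.
  rewrite -mulrA; have -> : h * N = 1 - h by lra.
  by rewrite mulrBr mulr1.
rewrite ler_pdivlMr; last lra.
lra.
Qed.
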